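(* For every integer $n\ge 1$, the symmetric group $S_n$ is almost monomial.
   Context: A finite group $G$ is called almost monomial if for every two distinct complex irreducible characters $\chi$ and $\psi$ of $G$ there exist a subgroup $H\le G$ and a linear (degree one) character $\varphi$ of $H$ such that the induced character $\operatorname{Ind}_H^G\varphi$ contains $\chi$ (i.e. $\langle \operatorname{Ind}_H^G\varphi,\chi\rangle\neq 0$) and does not contain $\psi$ (i.e. $\langle \operatorname{Ind}_H^G\varphi,\psi\rangle=0$), where $\langle\,,\rangle$ is the usual inner product of class functions. *)

(* Defs.v *)
From HB Require Import structures.
From mathcomp Require Import all_boot all_order all_algebra all_fingroup all_solvable all_field all_character.
Set Implicit Arguments. Unset Strict Implicit. Unset Printing Implicit Defensive.
Import GRing.Theory Num.Theory.
Local Open Scope ring_scope.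

Definition almost_monomial (gT : finGroupType) (G : {group gT}) : Prop :=
  forall chi psi : 'CF(G),
    chi \in irr G -> psi \in irr G -> chi != psi ->
    exists (H : {group gT}) (phi : 'CF(H)),
      [/\ H \subset G, phi \is a linear_char,
          '['Ind[G] phi, chi] != 0 & '['Ind[G] phi, psi] = 0].

(* Main.v *)
Require Import Defs.
From mathcomp Require Import all_boot all_order all_algebra all_fingroup all_solvable all_field all_character.
From mathcomp Require Import zify.
Set Implicit Arguments. Unset Strict Implicit. Unset Printing Implicit Defensive.

Section Orb.
Variable n : nat.
Implicit Types (s t : 'S_n) (x z : 'I_n).

Definition rep s x := odflt x [pick y in porbit s x].
Definition pos s x : nat := index x (traject s (rep s x) #|porbit s x|).

Lemma repE s x : [pick y in porbit s x] = Some (rep s x).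
Proof. by rewrite /rep; case: pickP => [//|/(_ x)]; rewrite porbit_id. Qed.

Lemma rep_in s x : rep s x \in porbit s x.
Proof. by rewrite /rep; case: pickP => [//|_]; rewrite porbit_id. Qed.

Lemma porbit_rep s x : porbit s (rep s x) = porbit s x.
Proof. by apply/eqP; rewrite eq_porbit_mem rep_in. Qed.

Lemma rep_eq s x z : porbit s x = porbit s z -> rep s x = rep s z.
Proof. by move=> e; have := repE s z; rewrite -e repE => -[]. Qed.

Lemma porbit_iter s x i : porbit s (iter i s x) = porbit s x.
Proof. by rewrite -permX porbit_perm. Qed.

Lemma mem_traject_rep s x : x \in traject s (rep s x) #|porbit s x|.
Proof. by rewrite -{1}porbit_rep -porbit_traject porbit_rep porbit_id. Qed.

Lemma pos_lt s x : pos s x < #|porbit s x|.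
Proof.
by have := index_mem x (traject s (rep s x) #|porbit s x|); rewrite size_traject mem_traject_rep.
Qed.

Lemma pos_iter s x : iter (pos s x) s (rep s x) = x.
Proof.
by rewrite -(nth_traject _ (pos_lt s x)) nth_index // mem_traject_rep.
Qed.

Lemma pos_of_iter s x i : i < #|porbit s x| -> pos s (iter i s (rep s x)) = i.
Proof.
move=> lti; rewrite /pos porbit_iter porbit_rep (rep_eq (porbit_iter _ _ _)).
rewrite (rep_eq (porbit_rep s x)) -(nth_traject _ lti) index_uniq ?size_traject //.
by have := uniq_traject_porbit s (rep s x); rewrite porbit_rep.
Qed.

Lemma pos_rep_eq s x z : porbit s x = porbit s z -> pos s x = pos s z -> x = z.
Proof. by move=> e1 e2; rewrite -(pos_iter s x) -(pos_iter s z) e2 (rep_eq e1). Qed.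

Lemma card_pos_lt s x k :
  #|[set z | (porbit s z == porbit s x) && (pos s z < k)]| = minn k #|porbit s x|.
Proof.
set m := #|porbit s x|.
have -> : [set z | (porbit s z == porbit s x) && (pos s z < k)] =
          [set iter (val i) s (rep s x) | i in [set i : 'I_m | val i < k]].
  apply/setP=> z; rewrite inE; apply/andP/imsetP => [[/eqP e lt]|[i]].
    have ltm : pos s z < m by rewrite /m -e pos_lt.
    exists (Ordinal ltm); first by rewrite inE.
    by rewrite /= -(rep_eq e) pos_iter.
  rewrite inE => lik ->; split; first by rewrite porbit_iter porbit_rep.
  by rewrite pos_of_iter // ltn_ord.
rewrite (@card_imset _ _ (fun i : 'I_m => iter (val i) s (rep s x))); last first.
  move=> i j /(congr1 (pos s)); rewrite !pos_of_iter ?ltn_ord // => e.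
  exact: val_inj.
rewrite -sum1dep_card; elim: m => [|m IH]; first by rewrite big_ord0 minn0.
rewrite big_mkcond big_ord_recr /= -big_mkcond /= IH.
case: ltnP => H; lia.
Qed.


Definition Phi s k := \sum_x (pos s x < k : nat).

Lemma sum_orbits s (F : 'I_n -> nat) :
  \sum_x F x = \sum_(O in porbits s) \sum_(x | porbit s x == O) F x.
Proof.
rewrite (partition_big (porbit s) (mem (porbits s))) //=.
by move=> x _; apply: imset_f.
Qed.

Lemma Phi_orb s k : Phi s k = \sum_(O in porbits s) minn k #|O|.
Proof.
rewrite /Phi (sum_orbits s); apply: eq_bigr => _ /imsetP[x _ ->].
rewrite -card_pos_lt -sum1dep_card big_mkcondr /=; apply: eq_bigr => z _.
by case: (_ < _).
Qed.

Lemma Phi_le s t (y : 'S_n) :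
  (forall u v, porbit s u = porbit s v -> pos t (y u) = pos t (y v) -> u = v) ->
  forall k, Phi t k <= Phi s k.
Proof.
move=> Hinj k; rewrite (Phi_orb s) /Phi (reindex_inj (@perm_inj _ y)) /= (sum_orbits s).
apply: leq_sum => _ /imsetP[x0 _ ->].
set X := [set x | (porbit s x == porbit s x0) && (pos t (y x) < k)].
have -> : \sum_(x | porbit s x == porbit s x0) (pos t (y x) < k : nat) = #|X|.
  rewrite -sum1dep_card big_mkcondr /=; apply: eq_bigr => z _.
  by case: (_ < _).
rewrite leq_min; apply/andP; split.
  rewrite cardE -(size_map (fun x => pos t (y x))) -[k](size_iota 0).
  apply: uniq_leq_size.
    rewrite map_inj_in_uniq ?enum_uniq // => u v.
    rewrite !mem_enum !inE => /andP[/eqP e1 _] /andP[/eqP e2 _].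
    by apply: Hinj; rewrite e1 e2.
  move=> w /mapP[u]; rewrite mem_enum inE => /andP[_ lt] ->.
  by rewrite mem_iota.

apply: subset_leq_card; apply/subsetP => u; rewrite inE => /andP[e _].
by rewrite -eq_porbit_mem.
Qed.


Definition gtc s k := #|[set O in porbits s | k < #|O|]|.
Definition cnt s k := #|[set O in porbits s | #|O| == k]|.

Lemma PhiS s k : Phi s k.+1 = Phi s k + gtc s k.
Proof.
rewrite !Phi_orb /gtc -sum1dep_card big_mkcondr /= -big_split /=.
apply: eq_bigr => O _.
by case: ltnP => H; lia.
Qed.

Lemma gtcS s k : gtc s k = cnt s k.+1 + gtc s k.+1.
Proof.
rewrite /gtc /cnt -(cardsID [set O : {set 'I_n} | #|O| == k.+1]).
congr (_ + _); apply: eq_card => O; rewrite !inE.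
  by case: (_ \in _) => //=; lia.
by case: (_ \in _) => //=; lia.
Qed.

Lemma cnt0 s : cnt s 0 = 0.
Proof.
apply/eqP; rewrite cards_eq0; apply/eqP/setP => O; rewrite !inE.
case: imsetP => //= -[x _ ->]; by rewrite (negbTE (card_porbit_neq0 _ _)).
Qed.

Lemma Phi_cnt s t : (forall k, Phi s k = Phi t k) -> forall k, cnt s k = cnt t k.
Proof.
move=> H.
have Hg k : gtc s k = gtc t k by have := H k.+1; rewrite !PhiS H; lia.
case=> [|k]; first by rewrite !cnt0.
by have := gtcS s k; have := gtcS t k; rewrite !Hg; lia.
Qed.


Lemma porbits_in s x : porbit s x \in porbits s.
Proof. by apply: imset_f. Qed.

Section Conj.
Variables s t : 'S_n.
Hypothesis Hc : forall k, cnt s k = cnt t k.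

Let Ls k := enum [set O in porbits s | #|O| == k].
Let Lt k := enum [set O in porbits t | #|O| == k].
Let beta (O : {set 'I_n}) := nth set0 (Lt #|O|) (index O (Ls #|O|)).

Lemma szL k : size (Lt k) = size (Ls k).
Proof. by rewrite /Lt /Ls -!cardE; exact: (esym (Hc k)). Qed.

Lemma beta_in O : O \in porbits s -> (beta O \in porbits t) && (#|beta O| == #|O|).
Proof.
move=> Os.
have OL : O \in Ls #|O| by rewrite mem_enum inE Os eqxx.
have : beta O \in Lt #|O|.
  by apply: mem_nth; rewrite szL index_mem.
by rewrite mem_enum inE.
Qed.

Lemma beta_inj O1 O2 : O1 \in porbits s -> O2 \in porbits s -> beta O1 = beta O2 -> O1 = O2.
Proof.
move=> O1s O2s e.
have /andP[_ /eqP c1] := beta_in O1s; have /andP[_ /eqP c2] := beta_in O2s.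
have ek : #|O1| = #|O2| by rewrite -c1 -c2 e.
have L1 : O1 \in Ls #|O1| by rewrite mem_enum inE O1s eqxx.
have L2 : O2 \in Ls #|O1| by rewrite mem_enum inE O2s ek eqxx.
move: e; rewrite /beta -ek => /eqP; rewrite nth_uniq ?enum_uniq //; last first.
- by rewrite szL index_mem.
- by rewrite szL index_mem.
by move/eqP=> ei; rewrite -(nth_index set0 L1) ei nth_index.
Qed.

Let rp x := odflt x [pick z in beta (porbit s x)].

Lemma rpE x : [pick z in beta (porbit s x)] = Some (rp x).
Proof.
rewrite /rp; case: pickP => [//|H].
have /andP[_ /eqP c] := beta_in (porbits_in s x).
by move: (card_porbit_neq0 s x); rewrite -c; move/eqP: (eq_card0 H) => ->.
Qed.

Lemma rp_eq x z : porbit s x = porbit s z -> rp x = rp z.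
Proof. by move=> e; have := rpE z; rewrite -e rpE => -[]. Qed.

Lemma porbit_rp x : porbit t (rp x) = beta (porbit s x).
Proof.
have := rpE x; case: pickP => // z zb [ez]; rewrite -ez.
have /andP[/imsetP[w _ ew] _] := beta_in (porbits_in s x).
by move: zb; rewrite ew => zw; apply/eqP; rewrite eq_porbit_mem.
Qed.

Lemma card_rp x : #|porbit t (rp x)| = #|porbit s x|.
Proof.
have /andP[_ /eqP c] := beta_in (porbits_in s x).
by rewrite porbit_rp.
Qed.

Let f x := iter (pos s x) t (rp x).

Lemma fS x : f (s x) = t (f x).
Proof.
have eo : porbit s (s x) = porbit s x by rewrite -(porbit_iter s x 1).
rewrite /f (rp_eq eo).
have sx : s x = iter (pos s x).+1 s (rep s x) by rewrite iterS pos_iter.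
have := pos_lt s x; rewrite leq_eqVlt => /orP[/eqP m1 | lt1].
  have -> : pos s (s x) = 0.
    rewrite sx m1 -{1}(porbit_rep s x) iter_porbit.
    by rewrite -[rep s x]/(iter 0 s (rep s x)) pos_of_iter // lt0n card_porbit_neq0.
  by rewrite -iterS m1 -card_rp iter_porbit.
by rewrite sx pos_of_iter.
Qed.

Lemma f_inj : injective f.
Proof.
move=> x1 x2 e.
have o1 : porbit t (f x1) = beta (porbit s x1) by rewrite /f porbit_iter porbit_rp.
have o2 : porbit t (f x2) = beta (porbit s x2) by rewrite /f porbit_iter porbit_rp.
have eo : porbit s x1 = porbit s x2.
  by apply: beta_inj; rewrite ?porbits_in // -o1 -o2 e.
move: e; rewrite /f (rp_eq eo) => e.
apply: (pos_rep_eq eo).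
have u := uniq_traject_porbit t (rp x2).
have l1 := pos_lt s x1; have l2 := pos_lt s x2.
rewrite -card_rp in l2; rewrite eo -card_rp in l1.
have l1' : pos s x1 < size (traject t (rp x2) #|porbit t (rp x2)|) by rewrite size_traject.
have l2' : pos s x2 < size (traject t (rp x2) #|porbit t (rp x2)|) by rewrite size_traject.
apply/eqP; rewrite -(nth_uniq (rp x2) l1' l2' u) (nth_traject _ l1) (nth_traject _ l2).
by rewrite e.
Qed.

Lemma conj_exists : exists g : 'S_n, t = (s ^ g)%g.
Proof.
exists (perm f_inj); apply/permP => z.
rewrite -(permKV (perm f_inj) z) permJ !permE; symmetry; apply: fS.
Qed.
End Conj.

End Orb.

Import GRing.Theory Num.Theory Order.TTheory.
Local Open Scope ring_scope.

Section S.
Variable n : nat.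
Local Notation G := [set: 'S_n]%G.

Definition sgnv (x : 'S_n) : algC := (-1) ^+ odd_perm x.
Definition sgn_mx (x : 'S_n) : 'M[algC]_1 := (sgnv x)%:M.
Lemma sgn_mx_repr : mx_repr G sgn_mx.
Proof.
split; first by rewrite /sgn_mx /sgnv odd_perm1.
by move=> x y _ _; rewrite /sgn_mx /sgnv odd_permM signr_addb scalar_mxM.
Qed.
Definition sgn_rep := MxRepresentation sgn_mx_repr.
Definition sgnCF : 'CF(G) := cfRepr sgn_rep.
Lemma sgnCF_lin : sgnCF \is a linear_char.
Proof. by apply/andP; split; [exact: cfRepr_char | rewrite cfRepr1]. Qed.
Lemma sgnCFE x : sgnCF x = sgnv x.
Proof. by rewrite cfunE inE mulr1n /= mxtrace_scalar. Qed.

Definition young (U : eqType) (f : 'I_n -> U) : {set 'S_n} :=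
  [set g : 'S_n | [forall x, f (g x) == f x]].
Lemma group_set_young U f : group_set (@young U f).
Proof.
apply/group_setP; split; first by rewrite inE; apply/forallP=> x; rewrite perm1.
move=> g h; rewrite !inE => /forallP Hg /forallP Hh; apply/forallP => x.
by rewrite permM (eqP (Hh _)) Hg.
Qed.
Canonical young_group U f := Group (@group_set_young U f).

Lemma dot_ind (A B : {group 'S_n}) :
  '['Ind[G] (1 : 'CF(A)), 'Ind[G] ('Res[B] sgnCF)] =
  #|A|%:R^-1 * (#|B|%:R^-1 * \sum_(y in G) \sum_(x in A | (x ^ y)%g \in B) sgnv x)^*.
Proof.
rewrite -Frobenius_reciprocity cfdotE; congr (_ * _).
transitivity (\sum_(x in A) (#|B|%:R^-1 * \sum_(y in G) (if (x ^ y)%g \in B then sgnv x else 0))^*).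
  apply: eq_bigr => x Ax.
  rewrite cfun1E Ax mul1r cfResE ?subsetT // cfIndE ?subsetT //; congr ((_ * _)^*).
  apply: eq_bigr => y _.
  case: ifP => xyB; first by rewrite cfResE ?subsetT // sgnCFE /sgnv odd_permJ.
  by rewrite cfun0 // xyB.
rewrite -rmorph_sum -mulr_sumr; congr ((_ * _)^*).
rewrite exchange_big /=; apply: eq_bigr => y _.
by rewrite big_mkcondr.
Qed.

Definition Sy (A B : {set 'S_n}) (y : 'S_n) := \sum_(x in A | (x ^ y)%g \in B) sgnv x.

Lemma S_zero (A B : {group 'S_n}) y u :
  u \in A -> (u ^ y)%g \in B -> odd_perm u -> Sy A B y = 0.
Proof.
move=> Au Bu ou.
have e : Sy A B y = - Sy A B y.
  rewrite /Sy [LHS](reindex_inj (mulgI u)) /= -sumrN.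
  apply: eq_big => [x | x _]; first by rewrite groupMl // conjMg groupMl.
  by rewrite /sgnv odd_permM ou addTb signrN.
have : Sy A B y *+ 2 == 0 by rewrite mulr2n {1}e addNr.
by rewrite mulrn_eq0 /= => /eqP.
Qed.

Lemma S_ge0 (A B : {group 'S_n}) y : 0 <= Sy A B y.
Proof.
case: (boolP [exists u, [&& u \in A, (u ^ y)%g \in B & odd_perm u]]).
  by case/existsP=> u /and3P[Au Bu ou]; rewrite (S_zero Au Bu ou).
move/existsPn=> H; apply: sumr_ge0 => x /andP[Ax Bx].
by have := H x; rewrite Ax Bx /= /sgnv => /negbTE ->.
Qed.

Lemma S_1 (A B : {group 'S_n}) : A :&: B = 1%g -> Sy A B 1 = 1.
Proof.
move=> AB; rewrite /Sy (big_pred1 1%g) /sgnv ?odd_perm1 // => x.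
by rewrite conjg1 -in_setI AB inE.
Qed.

Lemma dot_ne0 (A B : {group 'S_n}) : A :&: B = 1%g ->
  '['Ind[G] (1 : 'CF(A)), 'Ind[G] ('Res[B] sgnCF)] != 0.
Proof.
move=> AB; rewrite dot_ind mulf_neq0 ?invr_eq0 ?pnatr_eq0 -?lt0n ?cardG_gt0 //.
rewrite conjC_eq0 mulf_neq0 ?invr_eq0 ?pnatr_eq0 -?lt0n ?cardG_gt0 //.
rewrite lt0r_neq0 // (bigD1 1%g) ?inE //= -/(Sy A B 1) S_1 //.
by rewrite ltr_wpDr ?ltr01 // sumr_ge0 // => y _; apply: S_ge0.
Qed.

Lemma dot_ex (A B : {group 'S_n}) :
  '['Ind[G] (1 : 'CF(A)), 'Ind[G] ('Res[B] sgnCF)] != 0 ->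
  exists y, forall u, u \in A -> (u ^ y)%g \in B -> ~~ odd_perm u.
Proof.
move=> H.
case: (boolP [exists y, [forall u, (u \in A) && ((u ^ y)%g \in B) ==> ~~ odd_perm u]]).
  case/existsP=> y /forallP Hy; exists y => u Au Bu.
  by have := Hy u; rewrite Au Bu.
move/existsPn=> Hn; move: H; rewrite dot_ind big1 ?mulr0 ?rmorph0 ?mulr0 ?eqxx //.
move=> y _; have /forallPn[u] := Hn y; rewrite negb_imply negbK.
by case/andP=> /andP[Au Bu] ou; apply: (S_zero Au Bu ou).
Qed.

Definition rowg s := young_group (porbit s).
Definition colg s := young_group (pos s).
Definition pi s := 'Ind[G] (1 : 'CF(rowg s)).
Definition sig s := 'Ind[G] ('Res[colg s] sgnCF).

Lemma row_col s : rowg s :&: colg s = 1%g.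
Proof.
apply/eqP; rewrite eqEsubset sub1G andbT; apply/subsetP => u.
rewrite !inE => /andP[/forallP Hr /forallP Hc].
apply/eqP/permP => x; rewrite perm1.
exact: (pos_rep_eq (eqP (Hr x)) (eqP (Hc x))).
Qed.

Lemma L1 s : '[pi s, sig s] != 0.
Proof. exact: dot_ne0 (row_col s). Qed.

Lemma L2 s t : '[pi s, sig t] != 0 -> forall k, (Phi t k <= Phi s k)%N.
Proof.
case/dot_ex=> y Hy; apply: (Phi_le (y := y)) => u v e1 e2.
case: (eqVneq u v) => // neq; exfalso.
have H1 : tperm u v \in rowg s.
  rewrite inE; apply/forallP => x; case: tpermP => [->|->|] //; rewrite e1 //.
have H2 : (tperm u v ^ y)%g \in colg t.
  rewrite tpermJ inE; apply/forallP => x; case: tpermP => [->|->|] //; rewrite e2 //.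
by have := Hy _ H1 H2; rewrite odd_tperm neq.
Qed.

Lemma pi_char s : pi s \is a character.
Proof. by rewrite cfInd_char ?cfun1_char. Qed.
Lemma sig_char s : sig s \is a character.
Proof. by rewrite cfInd_char ?lin_charW ?cfRes_lin_char ?sgnCF_lin. Qed.

Lemma common_dot s t i :
  '[pi s, 'chi_i] != 0 -> '[sig t, 'chi_i] != 0 -> '[pi s, sig t] != 0.
Proof.
move=> H1 H2; rewrite cfdot_char_r ?sig_char // (bigD1 i) //= lt0r_neq0 //.
have Ni := Cnat_cfdot_char_irr _ (pi_char s); have Nj := Cnat_cfdot_char_irr _ (sig_char t).
rewrite ltr_wpDr ?sumr_ge0 // => [j _|]; first by rewrite mulr_ge0 ?natr_ge0.
by rewrite mulr_gt0 // natr_gt0.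
Qed.


Lemma conj_of s t : '[pi s, sig t] != 0 -> '[pi t, sig s] != 0 ->
  exists g : 'S_n, t = (s ^ g)%g.
Proof.
move=> H1 H2; apply: conj_exists; apply: Phi_cnt => k; apply/eqP.
by rewrite eqn_leq (L2 H1) (L2 H2).
Qed.

Definition ic (C : {set 'S_n}) : Iirr G :=
  odflt 0 [pick i | ('[pi (repr C), 'chi_i] != 0) && ('[sig (repr C), 'chi_i] != 0)].

Lemma ic_spec C : '[pi (repr C), 'chi_(ic C)] != 0 /\ '[sig (repr C), 'chi_(ic C)] != 0.
Proof.
rewrite /ic; case: pickP => [i /andP[]//|H]; exfalso.
have := L1 (repr C); rewrite cfdot_sum_irr big1 ?eqxx // => i _.
have := H i; move/negbT; rewrite negb_and !negbK => /orP[/eqP->|/eqP->].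
  by rewrite mul0r.
by rewrite conjC0 mulr0.
Qed.

Lemma class_eq C D : C \in classes G -> D \in classes G ->
  '[pi (repr C), sig (repr D)] != 0 -> '[pi (repr D), sig (repr C)] != 0 -> C = D.
Proof.
move=> /repr_classesP[_ eC] /repr_classesP[_ eD] H1 H2.
have [g eg] := conj_of H1 H2.
by rewrite eC eD eg classGidl // inE.
Qed.

Lemma ic_surj k : exists2 C, C \in classes G & ic C = k.
Proof.
have inj : {in classes G &, injective ic}.
  move=> C D CG DG e.
  have [a b] := ic_spec C; have [c d] := ic_spec D.
  rewrite e in a b.
  exact: class_eq CG DG (common_dot a d) (common_dot c b).
have : k \in ic @: classes G.
  have /eqP -> : ic @: classes G == [set: Iirr G].
    rewrite eqEcard subsetT cardsT card_in_imset // -NirrE /=.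
    by apply: eq_leq; apply: card_ord.
  by rewrite inE.
by case/imsetP=> C CG ->; exists C.
Qed.

End S.



Theorem theorem2p1 (n : nat) : (1 <= n)%N -> almost_monomial [set: 'S_n]%G.
Proof.
move=> _ chi psi /irrP[i ->] /irrP[j ->] neq.
have [C CG eC] := ic_surj i; have [D DG eD] := ic_surj j; subst i j.
have [a b] := ic_spec C; have [c d] := ic_spec D.
case: (eqVneq '[pi (repr C), 'chi_(ic D)] 0) => [z1|nz1].
  exists (rowg (repr C)), 1; split => //; first exact: subsetT.
  exact: cfun1_lin_char.
case: (eqVneq '[sig (repr C), 'chi_(ic D)] 0) => [z2|nz2].
  exists (colg (repr C)), ('Res[colg (repr C)] (sgnCF n)); split => //.
    exact: subsetT.
  by rewrite cfRes_lin_char ?sgnCF_lin.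
have eCD := class_eq CG DG (common_dot nz1 d) (common_dot c nz2).
by rewrite eCD eqxx in neq.
Qed.
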